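(* Let $M=D-A$ be an $n\times n$ SDDM matrix, where $D=\mathrm{diag}(d_1,\dots,d_n)$ is its diagonal, and let $\kappa=\max\{2,\kappa(D-A)\}$. Let $c=(1-1/\kappa)/\max_i d_i$. Then all eigenvalues of $c(D-A)$ lie in $[\frac{1}{2\kappa},2-\frac{1}{2\kappa}]$. Moreover, writing $c(D-A)=I-X$ with $X=I-c(D-A)$, all entries of $X$ are nonnegative and $\rho(X)\le 1-\frac{1}{2\kappa}$.
   Context: SDDM matrix: symmetric, positive definite, with nonpositive off-diagonal entries and $m_{ii}>\sum_{j\neq i}|m_{ij}|$ for all $i$. $\kappa(\cdot)$ is the condition number (ratio of largest to smallest singular value), and $\rho(\cdot)$ is the spectral radius. *)

(* Defs.v *)
From HB Require Import structures.
From mathcomp Require Import all_boot all_order all_algebra.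
From mathcomp Require Import complex.
Set Implicit Arguments. Unset Strict Implicit. Unset Printing Implicit Defensive.
Import Order.TTheory GRing.Theory Num.Theory.
Local Open Scope ring_scope.

Definition SDDM (R : realFieldType) (n : nat) (M : 'M[R]_n) : Prop :=
  [/\ M^T = M,
      (forall x : 'cV[R]_n, x != 0 -> 0 < (x^T *m M *m x) 0 0),
      (forall i j : 'I_n, i != j -> M i j <= 0) &
      (forall i : 'I_n, \sum_(j < n | j != i) `|M i j| < M i i)].

Definition singular_value (R : realFieldType) (n : nat) (A : 'M[R]_n) (s : R) : Prop :=
  0 <= s /\ eigenvalue (A^T *m A) (s ^+ 2).

Definition is_max_singular_value (R : realFieldType) (n : nat) (A : 'M[R]_n) (s : R) : Prop :=
  singular_value A s /\ forall t, singular_value A t -> t <= s.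

Definition is_min_singular_value (R : realFieldType) (n : nat) (A : 'M[R]_n) (s : R) : Prop :=
  singular_value A s /\ forall t, singular_value A t -> s <= t.

Definition cmx (R : rcfType) (n : nat) (A : 'M[R]_n) : 'M[R[i]]_n :=
  map_mx (fun x : R => (x%:C)%C) A.

Definition ceigenvalue (R : rcfType) (n : nat) (A : 'M[R]_n) (z : R[i]) : Prop :=
  eigenvalue (cmx A) z.

Definition spectral_radius_le (R : rcfType) (n : nat) (A : 'M[R]_n) (r : R) : Prop :=
  forall z : R[i], ceigenvalue A z -> `|z| <= (r%:C)%C.

(* Main.v *)
Require Import Defs.
From HB Require Import structures.
From mathcomp Require Import all_boot all_order all_algebra.
From mathcomp Require Import complex.
From mathcomp Require Import ring lra.
Import Order.TTheory GRing.Theory Num.Theory.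
Local Open Scope ring_scope.
Set Implicit Arguments. Unset Strict Implicit.


Lemma bounds (R : realFieldType) (k d s S r : R) : 2 <= k -> S / s <= k -> 0 < s -> d <= S -> s <= r -> r < 2 * d -> 0 < d ->
  1/(2*k) <= (1 - 1/k)/d * r <= 2 - 1/(2*k).
Proof.
move=> hk hS hs hdS hsr hr hd.
have kpos : 0 < k by apply: lt_le_trans hk.
have hks : S <= k * s by rewrite -ler_pdivrMr.
have hdr : d <= r * k by apply: (le_trans hdS); apply: (le_trans hks); rewrite mulrC ler_wpM2r // ltW.
have h1 : 2 * k^-1 <= 1 by rewrite ler_pdivrMr // mul1r.
have h2 : k^-1 <= d^-1 * r.
  rewrite mulrC -[k^-1]div1r ler_pdivrMr // mulrAC ler_pdivlMr // mul1r //.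
have h3 : d^-1 * r < 2 by rewrite mulrC ltr_pdivrMr // mulrC.
have ikpos : 0 < k^-1 by rewrite invr_gt0.
rewrite !div1r invfM -mulrA.
move: h1 h2 h3 ikpos; set a := k^-1; set b := d^-1 * r => h1 h2 h3 ikpos.
have p1 : 0 <= (1 - 2*a) * (b - a) by apply: mulr_ge0; lra.
have p2 : 0 <= a * (1 - 2*a) by apply: mulr_ge0; lra.
have p3 : 0 <= (1 - a) * (2 - b) by apply: mulr_ge0; lra.
have e : 2^-1 * a = a / 2 by rewrite mulrC.
rewrite e; apply/andP; split.
  rewrite ler_pdivrMr //. lra.
rewrite -subr_ge0.
have e2 : 2 - a / 2 - (1 - a) * b = (4 - a - 2 * ((1-a) * b)) / 2 by field.
rewrite e2 divr_ge0 //. lra.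
Qed.

Lemma abs_aux (R : realFieldType) (a b : R) : b <= a -> a <= 2 - b ->
  - (1 - b) <= 1 - a <= 1 - b.
Proof. move=> h1 h2; apply/andP; split; lra. Qed.

Section S.
Variable R : rcfType.
Local Notation C := (R[i]).

Lemma ceig_real n (M : 'M[R]_n) (r : R) :
  eigenvalue (cmx M) (r%:C)%C -> eigenvalue M r.
Proof. by rewrite /cmx !eigenvalue_root_char -map_char_poly fmorph_root. Qed.

Lemma cmx_conj n (M : 'M[R]_n) : map_mx Num.conj (cmx M) = cmx M.
Proof.
apply/matrixP => i j; rewrite !mxE conj_Creal //.
by apply/complex_realP; exists (M i j).
Qed.

Lemma ceig_is_real n (M : 'M[R]_n) (z : C) : M^T = M ->
  eigenvalue (cmx M) z -> z = ((complex.Re z)%:C)%C.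
Proof.
move=> Ms /eigenvalueP [v vA vn0].
set w := map_mx Num.conj v^T.
have hd : 0 < (v *m w) 0 0 by have := dotmx_is_dotmx vn0; rewrite dotmxE.
set B := v *m cmx M *m w.
have h1 : B 0 0 = z * (v *m w) 0 0 by rewrite /B vA -scalemxAl mxE.
have h2 : (map_mx Num.conj B^T) = B.
  rewrite /B /w !trmx_mul !map_mxM -!map_trmx !trmxK.
  have -> : (map_mx Num.conj (cmx M))^T = cmx M.
    by rewrite cmx_conj /cmx map_trmx Ms.
  rewrite -map_mx_comp mulmxA; congr (_ *m _ *m _).
  by apply/matrixP => i j; rewrite !mxE /= conjCK.
have h3 : (B 0 0)^* = B 0 0 by rewrite -{2}h2 !mxE.
have hz : z^* = z.
  have hw : ((v *m w) 0 0)^* = (v *m w) 0 0 by apply: conj_Creal; apply: gtr0_real.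
  move: h3; rewrite h1 rmorphM /= hw => /(mulIf _); apply; exact: lt0r_neq0.
apply/esym/RRe_real; by rewrite CrealE hz.
Qed.

Lemma Ms_ij n (M : 'M[R]_n) i j : M^T = M -> M j i = M i j.
Proof. by move=> Ms; rewrite -{1}Ms mxE. Qed.

Lemma gersh n (M : 'M[R]_n) (r : R) : SDDM M -> eigenvalue M r ->
  exists i, r < 2 * M i i.
Proof.
case=> Ms _ _ Hd /eigenvalueP [v vA vn0].
have [i0 hi0] : exists i, v 0 i != 0.
  apply/existsP; apply: contraNT vn0; rewrite negb_exists => /forallP uNN0.
  by apply/eqP/rowP=> j; rewrite mxE; apply/eqP; rewrite -[_ == _]negbK uNN0.
case: (@arg_maxP _ _ _ i0 xpredT (fun k : 'I_n => `|v 0 k|) isT) => i _ imax'.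
have imax : forall k, `|v 0 k| <= `|v 0 i| by move=> k; apply: imax'.
have vi_pos : 0 < `|v 0 i|.
  by apply: (lt_le_trans _ (imax i0)); rewrite normr_gt0.
exists i.
have e : \sum_j v 0 j * M j i = r * v 0 i.
  by have := congr1 (fun A : 'M[R]_(1,n) => A 0 i) vA; rewrite !mxE.
rewrite (bigD1 i) //= in e.
have e2 : (r - M i i) * v 0 i = \sum_(j | j != i) v 0 j * M j i.
  by rewrite mulrBl -e mulrC addrC addrK.
have h : `|r - M i i| <= \sum_(j < n | j != i) `|M i j|.
  rewrite -(ler_pM2l vi_pos) mulr_sumr mulrC -normrM e2.
  apply: (le_trans (ler_norm_sum _ _ _)); apply: ler_sum => j _.
  by rewrite normrM -{1}Ms mxE ler_wpM2r.
have := Hd i; have := ler_norm (r - M i i).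
move=> h1 h2; rewrite mulr2n mulrDl mul1r -ltrBlDr.
exact: (le_lt_trans h1 (le_lt_trans h h2)).
Qed.

Lemma cmx_normal n (M : 'M[R]_n) : M^T = M -> cmx M \is normalmx.
Proof.
move=> Ms; apply: symmetric_normalmx.
  apply/is_hermitianmxP; rewrite expr0 scale1r map_mx_id //.
  by rewrite /cmx map_trmx Ms.
by apply/mxOverP => i j; rewrite mxE; apply/complex_realP; exists (M i j).
Qed.

Lemma spectral_eig n (A : 'M[C]_n) k : A \is normalmx ->
  eigenvalue A (spectral_diag A 0 k).
Proof.
move=> /orthomx_spectralP hA; set P := spectralmx A in hA; set sp := spectral_diag A in hA *.
have Pu : P \in unitmx by apply: spectral_unit.
apply/eigenvalueP; exists (row k P).
  have e : row k P *m invmx P = row k 1%:M by rewrite -row_mul mulmxV.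
  rewrite {1}hA !mulmxA e.
  have -> : row k 1%:M *m diag_mx sp = sp 0 k *: row k 1%:M.
    rewrite mul_mx_diag; apply/rowP => j; rewrite !mxE.
    by case: eqVneq => [->|]; rewrite ?mulr1 ?mulr0 ?mul1r ?mul0r.
  by rewrite -scalemxAl -row_mul mul1mx.
apply: contraTneq isT => h0.
have : row k P *m invmx P = row k 1%:M by rewrite -row_mul mulmxV.
rewrite h0 mul0mx => /rowP /(_ k); rewrite !mxE eqxx => /eqP.
by rewrite eq_sym oner_eq0.
Qed.

Lemma top_eig n (M : 'M[R]_n) (i : 'I_n) : M^T = M ->
  exists r, eigenvalue M r /\ M i i <= r.
Proof.
move=> Ms; have hN := cmx_normal Ms.
have eigk k : spectral_diag (cmx M) 0 k = ((complex.Re (spectral_diag (cmx M) 0 k))%:C)%C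
   /\ eigenvalue M (complex.Re (spectral_diag (cmx M) 0 k)).
  have he := spectral_eig k hN.
  have hr := ceig_is_real Ms he; split => //; apply: ceig_real; by rewrite -hr.
move: (hN) => /orthomx_spectralP hA.
set P := spectralmx (cmx M) in hA; set sp := spectral_diag (cmx M) in hA eigk.
have Pu : P \in unitmx by apply: spectral_unit.
have iP : invmx P = map_mx Num.conj P^T by apply: invmx_unitary; apply: spectral_unitarymx.
case: (@arg_maxP _ _ _ i xpredT (fun k => complex.Re (sp 0 k)) isT) => km _ kmax.
exists (complex.Re (sp 0 km)); split; first exact: (eigk km).2.
rewrite -lecR.
have -> : ((M i i)%:C)%C = cmx M i i by rewrite mxE.
have h1 : \sum_k invmx P i k * P k i = 1.
  by have := congr1 (fun B : 'M[C]_n => B i i) (mulVmx Pu); rewrite !mxE => ->; rewrite eqxx.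
rewrite {1}hA mxE -[X in _ <= X]mulr1 -h1 mulr_sumr; apply: ler_sum => k _.
rewrite mul_mx_diag mxE mulrAC [X in _ <= X]mulrC ler_wpM2l //.
  by rewrite iP !mxE mulrC mul_conjC_ge0.
by rewrite (eigk k).1 lecR; apply: kmax.
Qed.

Lemma normC_real (x : R) : `|(x%:C)%C| = ((`|x|)%:C)%C.
Proof. by rewrite normc_def /= expr0n addr0 sqrtr_sqr. Qed.

Lemma PD_nz n (M : 'M[R]_n) (u : 'rV[R]_n) : SDDM M -> u != 0 -> u *m M != 0.
Proof.
case=> _ PD _ _ un0; apply/negP => /eqP h.
have : u^T != 0 by rewrite trmx_eq0.
move=> /PD; rewrite trmxK h mul0mx mxE; by rewrite ltxx.
Qed.

Lemma eig_pos n (M : 'M[R]_n) r : SDDM M -> eigenvalue M r -> 0 < r.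
Proof.
move=> HS; have [Ms PD _ _] := HS; case/eigenvalueP => v vA vn0.
have : v^T != 0 by rewrite trmx_eq0.
move=> /PD; rewrite trmxK vA -scalemxAl mxE => h.
have hs : 0 <= (v *m v^T) 0 0.
  by rewrite mxE; apply: sumr_ge0 => j _; rewrite mxE -expr2 sqr_ge0.
case: (ltrP 0 r) => // hr.
by have := mulr_le0_ge0 hr hs; rewrite leNgt h.
Qed.

Lemma eig_sv n (M : 'M[R]_n) r : SDDM M -> eigenvalue M r -> singular_value M r.
Proof.
move=> HS he; split; first exact/ltW/(eig_pos HS he).
have [Ms _ _ _] := HS; case/eigenvalueP: he => v vA vn0.
apply/eigenvalueP; exists v => //.
by rewrite Ms mulmxA vA -scalemxAl vA scalerA expr2.
Qed.

Lemma sv_pos n (M : 'M[R]_n) s : SDDM M -> singular_value M s -> 0 < s.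
Proof.
move=> HS [s0 /eigenvalueP [v vA vn0]].
have [Ms _ _ _] := HS.
rewrite lt0r s0 andbT; apply/negP => /eqP s00.
move: vA; rewrite s00 expr2 mulr0 scale0r Ms mulmxA => /eqP.
apply/negP; apply: PD_nz => //; exact: PD_nz.
Qed.
End S.

Theorem mainTheorem3 (R : rcfType) (n : nat) (M : 'M[R]_n) (smax smin : R) :
  SDDM M ->
  is_max_singular_value M smax ->
  is_min_singular_value M smin ->
  let kappa := Num.max 2 (smax / smin) in
  let c := (1 - 1 / kappa) / \big[Num.max/0]_(i < n) M i i in
  let X := 1%:M - c *: M in
  (forall z : R[i], ceigenvalue (c *: M) z ->
      ((1 / (2 * kappa))%:C)%C <= z <= ((2 - 1 / (2 * kappa))%:C)%C) /\
  (forall i j : 'I_n, 0 <= X i j) /\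
  spectral_radius_le X (1 - 1 / (2 * kappa)).
Proof.
move=> HS [Hsmax smaxM] [Hsmin sminM] kappa c X.
have [Ms PD Hoff Hd] := HS.
have [v0 _ v0n0] := eigenvalueP Hsmax.2.
have [i0 _] : exists i, v0 0 i != 0.
  apply/existsP; apply: contraNT v0n0; rewrite negb_exists => /forallP uNN0.
  by apply/eqP/rowP=> j; rewrite mxE; apply/eqP; rewrite -[_ == _]negbK uNN0.
have Mpos i : 0 < M i i.
  apply: le_lt_trans (Hd i); apply: sumr_ge0 => j _; exact: normr_ge0.
have [im _ him] := @eq_bigmax _ _ _ 0 i0 xpredT (fun i => M i i) isT (fun i _ => ltW (Mpos i)).
have dle i : M i i <= \big[Num.max/0]_(i < n) M i i := le_bigmax 0 (fun i => M i i) i.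
have dpos : 0 < \big[Num.max/0]_(i < n) M i i by rewrite him.
have [r1 [hr1 hr1d]] := top_eig im Ms.
have hS : \big[Num.max/0]_(i < n) M i i <= smax.
  by rewrite him; apply: le_trans hr1d (smaxM _ (eig_sv HS hr1)).
have spos := sv_pos HS Hsmin.
have k2 : 2 <= kappa by rewrite le_max lexx.
have kS : smax / smin <= kappa by rewrite le_max lexx orbT.
have key r : eigenvalue M r -> 1/(2*kappa) <= c * r <= 2 - 1/(2*kappa).
  move=> he; apply: (bounds k2 kS spos hS (sminM _ (eig_sv HS he)) _ dpos).
  have [i hi] := gersh HS he; apply: lt_le_trans hi _; apply: ler_wpM2l => //; exact: dle.
have kpos : 0 < kappa by apply: lt_le_trans k2.
have c1 : 0 < 1 - 1 / kappa.
  by rewrite subr_gt0 ltr_pdivrMr // mul1r; apply: lt_le_trans k2; rewrite ltr1n.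
have cpos : 0 < c by rewrite /c divr_gt0.
have cC0 : (c%:C)%C != 0.
  by apply/eqP => /(congr1 (@complex.Re R)) /= h; move: cpos; rewrite h ltxx.
have eigC z : eigenvalue (cmx M) z -> exists r, z = (r%:C)%C /\ eigenvalue M r.
  move=> he; exists (complex.Re z); split; first exact: ceig_is_real Ms he.
  by apply: ceig_real; rewrite -(ceig_is_real Ms he).
split.
  move=> z /eigenvalueP [v vA vn0].
  have : eigenvalue (cmx M) (z / (c%:C)%C).
    apply/eigenvalueP; exists v => //.
    move: vA; rewrite /cmx map_mxZ -scalemxAr /= => vA.
    by rewrite -[LHS](scalerK cC0) vA scalerA mulrC.
  case/eigC => r [hz he].
  have -> : z = ((c * r)%:C)%C by rewrite rmorphM /= -hz mulrC divfK.
  by rewrite !lecR; apply: key.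
split.
  move=> i j; rewrite /X !mxE; case: eqVneq => [->|hij] /=.
    rewrite subr_ge0 mulr1n; apply: (@le_trans _ _ (1 - 1/kappa)).
      rewrite /c mulrAC ler_pdivrMr //; apply: ler_wpM2l; [exact: ltW | exact: dle].
    by rewrite gerDl oppr_le0 divr_ge0 // ltW.
  rewrite sub0r oppr_ge0; apply: mulr_ge0_le0; [exact: ltW | exact: Hoff].
move=> z /eigenvalueP [v vA vn0].
have : eigenvalue (cmx M) ((1 - z) / (c%:C)%C).
  apply/eigenvalueP; exists v => //.
  move: vA; rewrite /cmx /X map_mxB map_mx1 map_mxZ mulmxBr mulmx1 -scalemxAr /= => vA.
  have vA' : (c%:C)%C *: (v *m map_mx (real_complex R) M) = (1 - z) *: v.
    by rewrite scalerBl scale1r -vA opprB addrC subrK.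
  by rewrite -[LHS](scalerK cC0) vA' scalerA mulrC.
case/eigC => r [hz he].
have -> : z = ((1 - c * r)%:C)%C.
  by rewrite rmorphB rmorphM /= rmorph1 -hz mulrC divfK // opprB addrC subrK.
rewrite normC_real lecR ler_norml; have /andP [h1 h2] := key r he.
exact: abs_aux.
Qed.
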